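(* Let $w\in S_n$ and $v\in S_n$ with $v\le w$. Then the restriction $[\Omega_v]_{X_w}:=\iota([\Omega_v])$ is the unique Knutson–Tao class for $v$ in $H^*_T(X_w)$.
   Context: Let $G=GL_n(\mathbb{C})$, $B$ (resp. $B^-$) the invertible upper- (resp. lower-) triangular matrices, and $T$ the diagonal torus. Permutations are identified with permutation matrices via $we_i=e_{w(i)}$, and $s_{jk}$ is the transposition of $j,k$. $X_w=\overline{BwB/B}$, the Bruhat order is $v\le w$ iff $[v]\in X_w$, $\mathrm{Inv}(w)=\{t_i-t_j:i<j,\ w^{-1}(i)>w^{-1}(j)\}$, and $\ell(w)=|\mathrm{Inv}(w)|$. In GKM form, $H^*_T(X_w)$ is the ring of tuples $(p_u)_{u\le w}$, $p_u\in\mathbb{C}[t_1,\ldots,t_n]$, with $p_u-p_{s_{jk}u}\in\langle t_j-t_k\rangle$ whenever $j<k$ and $u,s_{jk}u\le w$; $H^*_T(G/B)$ is the case $w=w_0$. Restriction $\iota:H^*_T(G/B)\to H^*_T(X_w)$ is $\iota((p_u)_{u\in S_n})=(p_u)_{u\le w}$. The Schubert class $[\Omega_v]\in H^*_T(G/B)$ is the equivariant class of $\overline{B^-vB/B}$; writing $[\Omega_v]=(p^v_u)_u$, one has $p^v_u=0$ unless $u\ge v$, each nonzero $p^v_u$ homogeneous of degree $\ell(v)$, and $p^v_v=\prod_{\beta\in\mathrm{Inv}(v)}\beta$. The moment graph of $X_w$ has vertices $\{u\le w\}$ and an edge between $u$ and $s_{jk}u$ (both $\le w$), directed from the Bruhat-larger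 to the Bruhat-smaller endpoint and labeled $t_j-t_k$. The edges out of $u$ are labeled exactly by $\mathrm{Inv}(u)$. A Knutson–Tao class for $v$ in $H^*_T(X_w)$ is $(q_u)_{u\le w}\in H^*_T(X_w)$ with: $q_v$ equal to the product of the labels of the edges out of $v$; every nonzero $q_u$ homogeneous of degree $\deg q_v$; and $q_u=0$ whenever there is no directed path of positive length from $u$ to $v$. *)

(* Defs.v *)
From HB Require Import structures.
From mathcomp Require Import all_boot all_order all_algebra all_fingroup.
From mathcomp Require Import mpoly.
Set Implicit Arguments. Unset Strict Implicit. Unset Printing Implicit Defensive.
Import GRing.Theory.
Local Open Scope ring_scope.

Section SchubertDefs.
Variable n : nat.
Variable F : numClosedFieldType.

(* S_n acting on indices 'I_n = {0,...,n-1} (playing the role of {1,...,n}). *)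
Notation perm_n := {perm 'I_n}.

(* s_{jk} u := s_{jk} o u (product of permutation matrices = composition).
   In mathcomp, (u * s) x = s (u x), so s_{jk} o u = u * tperm j k. *)
Definition sref (j k : 'I_n) (u : perm_n) : perm_n := (u * tperm j k)%g.

Definition inv_pair (w : perm_n) (p : 'I_n * 'I_n) : bool :=
  (p.1 < p.2)%N && (w^-1%g p.2 < w^-1%g p.1)%N.

Definition length (w : perm_n) : nat := #|[pred p | inv_pair w p]|.

(* Bruhat order as the reflexive-transitive closure of  u -> s_{jk} u  with l increasing
   (Bjorner-Brenti, Def. 2.1.1). *)
Definition bruhat_step (u u' : perm_n) : bool :=
  [exists j : 'I_n, exists k : 'I_n,
     [&& (j < k)%N, u' == sref j k u & (length u < length u')%N]].

Definition bruhat_le (v w : perm_n) : bool := connect bruhat_step v w.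

Definition bruhat_lt (v w : perm_n) : bool := (v != w) && bruhat_le v w.

Definition inv_prod (v : perm_n) : {mpoly F[n]} :=
  \prod_(p : 'I_n * 'I_n | inv_pair v p) ('X_p.1 - 'X_p.2).

(* GKM description: a tuple (q_u) indexed by the vertices u with P u (P = {u <= w}),
   represented as a function on all of S_n whose values outside P are irrelevant. *)
Definition GKM_class (P : pred perm_n) (q : perm_n -> {mpoly F[n]}) : Prop :=
  forall (u : perm_n) (j k : 'I_n), (j < k)%N -> P u -> P (sref j k u) ->
    exists r : {mpoly F[n]}, q u - q (sref j k u) = r * ('X_j - 'X_k).

Definition HT_Xw (w : perm_n) := GKM_class (fun u => bruhat_le u w).
Definition HT_GB := GKM_class predT.

Definition mg_edge (w : perm_n) (u u' : perm_n) : bool :=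
  [exists j : 'I_n, exists k : 'I_n,
     [&& (j < k)%N, u' == sref j k u, bruhat_le u w, bruhat_le u' w
       & bruhat_lt u' u]].

Definition mg_pos_path (w u v : perm_n) : bool :=
  [exists u' : perm_n, mg_edge w u u' && connect (mg_edge w) u' v].

Definition out_label_prod (w v : perm_n) : {mpoly F[n]} :=
  \prod_(p : 'I_n * 'I_n | (p.1 < p.2)%N && mg_edge w v (sref p.1 p.2 v))
     ('X_p.1 - 'X_p.2).

(* Total degree of a polynomial (meaningful for nonzero polynomials). *)
Definition tdeg (p : {mpoly F[n]}) : nat := (msize p).-1.

Definition KT_class (w v : perm_n) (q : perm_n -> {mpoly F[n]}) : Prop :=
  [/\ HT_Xw w q,
      q v = out_label_prod w v,
      (forall u, bruhat_le u w -> q u != 0 -> q u \is (tdeg (q v)).-homog) &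
      (forall u, bruhat_le u w -> u != v -> ~~ mg_pos_path w u v -> q u = 0)].

Definition schubert_class_props (v : perm_n) (p : perm_n -> {mpoly F[n]}) : Prop :=
  [/\ HT_GB p,
      (forall u, ~~ bruhat_le v u -> p u = 0),
      (forall u, p u != 0 -> p u \is (length v).-homog) &
      p v = inv_prod v].

End SchubertDefs.

(* Main.v *)
From Pilot Require Import Defs.
From HB Require Import structures.
From mathcomp Require Import all_boot all_order all_algebra all_fingroup.
From mathcomp Require Import mpoly.
From mathcomp Require Import ring.
Import Pilot.Defs.
Set Implicit Arguments. Unset Strict Implicit. Unset Printing Implicit Defensive.
Import GRing.Theory.

Section AlgS.
Local Open Scope ring_scope.

Section Alg.
Variable R : idomainType.
Variable n : nat.
Implicit Types f g : {mpoly R[n]}.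

Definition L (P : 'I_n * 'I_n) : {mpoly R[n]} := 'X_P.1 - 'X_P.2.
Definition dvd (a f : {mpoly R[n]}) := exists r, f = r * a.

Lemma X_neq (i j : 'I_n) : i != j -> 'X_i - 'X_j != 0 :> {mpoly R[n]}.
Proof.
move=> ij; apply/eqP => /(congr1 (meval (fun l => (l == i)%:R))).
rewrite mevalB !mevalXU eqxx eq_sym.
by rewrite (negbTE ij) subr0 meval0; apply/eqP; rewrite oner_eq0.
Qed.

Definition sig (a b : 'I_n) f : {mpoly R[n]} :=
  comp_mpoly [tuple (if i == a then 'X_b else 'X_i) | i < n] f.

Lemma sigX a b i : sig a b 'X_i = if i == a then 'X_b else 'X_i.
Proof. by rewrite /sig comp_mpolyXU -tnth_nth tnth_mktuple. Qed.

Lemma sigB a b f g : sig a b (f - g) = sig a b f - sig a b g.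
Proof. by rewrite /sig rmorphB. Qed.
Lemma sigM a b f g : sig a b (f * g) = sig a b f * sig a b g.
Proof. by rewrite /sig rmorphM. Qed.

Lemma sig_sub a b f : exists r, f - sig a b f = r * ('X_a - 'X_b).
Proof.
pose D := fun f => exists r, f - sig a b f = r * ('X_a - 'X_b).
have D0 : D 0 by exists 0; rewrite /sig raddf0 subr0 mul0r.
have DD : forall f g, D f -> D g -> D (f + g).
  move=> f1 g1 [r1 h1] [r2 h2]; exists (r1 + r2).
  rewrite /sig raddfD /= -/(sig a b f1) -/(sig a b g1) mulrDl -h1 -h2; ring.
have DM : forall f g, D f -> D g -> D (f * g).
  move=> f1 g1 [r1 h1] [r2 h2]; exists (r1 * g1 + sig a b f1 * r2).
  rewrite /sig rmorphM /= -/(sig a b f1) -/(sig a b g1).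
  have e1 : sig a b f1 = f1 - r1 * ('X_a - 'X_b) by rewrite -h1; ring.
  have e2 : sig a b g1 = g1 - r2 * ('X_a - 'X_b) by rewrite -h2; ring.
  rewrite e1 e2; ring.
have DC : forall c, D c%:MP by move=> c; exists 0; rewrite /sig comp_mpolyC subrr mul0r.
have DX : forall i, D 'X_i.
  move=> i; rewrite /D sigX; case: eqP => [->|_]; first by exists 1; rewrite mul1r.
  by exists 0; rewrite subrr mul0r.
rewrite -/(D f) [f]mpolyE; apply: (big_ind D) => //.
move=> m _.
rewrite -mul_mpolyC; apply: (DM); first exact: DC.
have D1 : D 1 by exists 0; rewrite /sig rmorph1 subrr mul0r.
rewrite mpolyXE_id; apply: (big_ind D) => //.
move=> i _.
move: (m i) => k; elim: k => [|k IHk]; first by rewrite expr0.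
by rewrite exprS; apply: (DM).
Qed.


Definition ordp (P : 'I_n * 'I_n) := (P.1 < P.2)%N.

Lemma sig_ne (a b c d : 'I_n) : (a < b)%N -> (c < d)%N -> (c, d) != (a, b) ->
  sig a b ('X_c - 'X_d) != 0.
Proof.
move=> ab cd ne; rewrite sigB !sigX.
case: (eqVneq c a) => [eca|nca]; case: (eqVneq d a) => [eda|nda]; apply: X_neq.
- by move: cd; rewrite eca eda ltnn.
- subst c; apply/eqP => ebd; subst d; by rewrite eqxx in ne.
- by apply/eqP => ecb; move: cd ab; rewrite ecb eda => h1 h2; have := ltn_trans h1 h2; rewrite ltnn.
- by apply/eqP => ecd; move: cd; rewrite ecd ltnn.
Qed.

Lemma prime1 (P Q : 'I_n * 'I_n) r : ordp P -> ordp Q -> Q != P ->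
  dvd (L P) (r * L Q) -> dvd (L P) r.
Proof.
case: P => a b; case: Q => c d; rewrite /ordp /= => ab cd ne [s hs].
have := congr1 (sig a b) hs; rewrite !sigM /L /= (sigB a b 'X_a) !sigX eqxx.
case: eqP => [eba|_]; first by move: ab; rewrite eba ltnn.
rewrite subrr mulr0 => /eqP; rewrite mulf_eq0 (negbTE (sig_ne ab cd ne)) orbF => /eqP h0.
have [r' hr'] := sig_sub a b r; exists r'; by rewrite -hr' h0 subr0.
Qed.

Lemma prime2 (s : seq ('I_n * 'I_n)) P r : ordp P -> all ordp s -> P \notin s ->
  dvd (L P) (r * \prod_(Q <- s) L Q) -> dvd (L P) r.
Proof.
move=> oP; elim: s r => [|Q s IH] r; first by rewrite big_nil mulr1.
rewrite /= in_cons negb_or => /andP [oQ os] /andP [nPQ nPs].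
rewrite big_cons mulrA (mulrC r) -mulrA mulrC => h.
apply: (IH _ os nPs); apply: (prime1 oP oQ _ h).
by rewrite eq_sym.
Qed.

Lemma prod_dvd (s : seq ('I_n * 'I_n)) f : uniq s -> all ordp s ->
  (forall P, P \in s -> dvd (L P) f) -> dvd (\prod_(Q <- s) L Q) f.
Proof.
elim: s => [|P s IH] /=; first by move=> _ _ _; exists f; rewrite big_nil mulr1.
move=> /andP [nPs us] /andP [oP os] hd.
have [r hr] := IH us os (fun Q hQ => hd Q (mem_behead (s := P :: s) hQ)).
have : dvd (L P) (r * \prod_(Q <- s) L Q) by rewrite -hr; apply: hd; rewrite mem_head.
move=> /(prime2 oP os nPs) [r' hr']; exists r'.
by rewrite hr hr' big_cons mulrA.
Qed.

Lemma msize_homog (p : {mpoly R[n]}) d : p != 0 -> p \is d.-homog -> msize p = d.+1.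
Proof.
move=> nz hp; rewrite -mlead_deg //; congr S.
exact: (dhomog_mf hp (mlead_supp nz)).
Qed.

Lemma L_homog P : L P \is 1.-homog.
Proof. by rewrite /L rpredB // dhomogX /= mdeg1. Qed.

Lemma prod_homog (s : seq ('I_n * 'I_n)) : \prod_(Q <- s) L Q \is (size s).-homog.
Proof.
elim: s => [|P s IH]; first by rewrite big_nil dhomog1.
by rewrite big_cons /=; rewrite -add1n; apply: dhomogM => //; apply: L_homog.
Qed.

Lemma L_neq0 P : ordp P -> L P != 0.
Proof. by move=> oP; apply: X_neq; apply/eqP => e; move: oP; rewrite /ordp e ltnn. Qed.

Lemma prod_neq0 (s : seq ('I_n * 'I_n)) : all ordp s -> \prod_(Q <- s) L Q != 0.
Proof.
elim: s => [|P s IH]; first by rewrite big_nil oner_eq0.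
by move=> /= /andP [oP os]; rewrite big_cons mulf_neq0 // ?L_neq0 // IH.
Qed.

Lemma count_bound (s : seq ('I_n * 'I_n)) f d : uniq s -> all ordp s ->
  f != 0 -> f \is d.-homog -> (forall P, P \in s -> dvd (L P) f) -> (size s <= d)%N.
Proof.
move=> us os nz hf hd; have [r hr] := prod_dvd us os hd.
have nzr : r != 0 by apply: contraNneq nz => e; rewrite hr e mul0r.
have := msize_homog nz hf; rewrite hr msizeM // ?prod_neq0 //.
rewrite (msize_homog (prod_neq0 os) (prod_homog s)).
have : (0 < msize r)%N by rewrite lt0n msize_poly_eq0.
case: (msize r) => // k _ /=.
rewrite addnS => -[<-]; exact: leq_addl.
Qed.

End Alg.
End AlgS.

Section Comb.
Variable n : nat.
Notation perm_n := {perm 'I_n}.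

Lemma sref_inv (a b : 'I_n) (v : perm_n) x :
  ((sref a b v)^-1)%g x = (v^-1)%g (tperm a b x).
Proof. by rewrite /sref invMg permM tpermV. Qed.

Lemma srefK (a b : 'I_n) (v : perm_n) : sref a b (sref a b v) = v.
Proof. by apply/permP => x; rewrite /sref !permM tpermK. Qed.

Lemma len_lt (v : perm_n) (a b : 'I_n) : (a < b)%N -> inv_pair v (a, b) ->
  (length (sref a b v) < length v)%N.
Proof.
move=> ab /andP [_ /= hab].
set u := sref a b v; set t := tperm a b; set pi := (v^-1)%g.
have hu : forall x, (u^-1)%g x = pi (t x) by move=> x; rewrite sref_inv.
pose phi (P : 'I_n * 'I_n) := if (t P.1 < t P.2)%N then (t P.1, t P.2) else P.
have E : forall w : perm_n, length w = #|[set P | inv_pair w P]|.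
  by move=> w; rewrite /length cardsE.
rewrite !E -(card_in_imset (f := phi)); last first.
  case=> i j; case=> i' j'; rewrite !inE /inv_pair /phi /= => /andP [ij _] /andP [ij' _].
  case: ifP => h1; case: ifP => h2 //.
  - by case=> /perm_inj -> /perm_inj ->.
  - case=> e1 e2; move: h2; by rewrite -e1 -e2 !tpermK ij.
  - case=> e1 e2; move: h1; by rewrite e1 e2 !tpermK ij'.
rewrite (cardsD1 (a, b) [set P | inv_pair v P]) inE /inv_pair /= ab hab /= add1n ltnS.
apply: subset_leq_card; apply/subsetP => Q /imsetP [[i j]]; rewrite !inE /inv_pair /=.
rewrite !hu => /andP [ij hp] ->; rewrite /phi /=.
case: ifP => hn /=.
- rewrite hn /=; apply/andP; split; last exact: hp.
  apply/eqP; case=> e1 e2.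
  by move: ij; rewrite -(tpermK a b i) -(tpermK a b j) -/t e1 e2 /t tpermL tpermR ltnNge ltnW.
- rewrite ij /=.
  move: hn hp; rewrite /t.
  case: (tpermP a b i) => [ei|ei|nia nib]; case: (tpermP a b j) => [ej|ej|nja njb].
  + by move: ij; rewrite ei ej ltnn.
  + by move=> _ h; move: hab; rewrite ei ej ltnNge ltnW.
  + move=> hn h; subst i; apply/andP; split.
      by apply/eqP; case=> /eqP; apply/negP; apply/eqP.
    exact: ltn_trans h hab.
  + by move: ij; rewrite ei ej ltnNge ltnW.
  + by move: ij; rewrite ei ej ltnn.
  + by move: ij; rewrite ei => h; rewrite (ltn_trans ab h).
  + by move: ij; rewrite ej => h; rewrite (ltn_trans h ab).
  + move=> _ h; subst j; apply/andP; split; last exact: ltn_trans hab h.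
    by apply/eqP; case=> /eqP; apply/negP; apply/eqP.
  + by rewrite ij.
Qed.


Lemma connect_inc (T : finType) (e : rel T) (f : T -> nat) x y :
  (forall x y, e x y -> f x < f y) -> connect e x y -> x = y \/ f x < f y.
Proof.
move=> he /connectP [s]; elim: s x => [|z s IH] x /=; first by move=> _ ->; left.
move=> /andP [exz ps] ey; right; case: (IH z ps ey) => [<-|h]; first exact: he.
exact: ltn_trans (he _ _ exz) h.
Qed.

Lemma connect_dec (T : finType) (e : rel T) (f : T -> nat) x y :
  (forall x y, e x y -> f y < f x) -> connect e x y -> x = y \/ f y < f x.
Proof.
move=> he /connectP [s]; elim: s x => [|z s IH] x /=; first by move=> _ ->; left.
move=> /andP [exz ps] ey; right; case: (IH z ps ey) => [<-|h]; first exact: he.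
exact: ltn_trans h (he _ _ exz).
Qed.

Lemma step_len (x y : perm_n) : bruhat_step x y -> length x < length y.
Proof. by case/existsP => j /existsP [k] /and3P []. Qed.

Lemma le_len (x y : perm_n) : bruhat_le x y -> x = y \/ length x < length y.
Proof. by apply: connect_inc; exact: step_len. Qed.

Lemma lt_len (x y : perm_n) : bruhat_lt x y -> length x < length y.
Proof. by case/andP => ne /le_len [e|//]; rewrite e eqxx in ne. Qed.

Lemma edge_len (w x y : perm_n) : mg_edge w x y -> length y < length x.
Proof. by case/existsP => j /existsP [k] /and5P [_ _ _ _ /lt_len]. Qed.

Lemma step_of (j k : 'I_n) (u : perm_n) : j < k -> length (sref j k u) < length u ->
  bruhat_step (sref j k u) u.
Proof.
by move=> jk hl; apply/existsP; exists j; apply/existsP; exists k; rewrite jk srefK eqxx hl.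
Qed.

Lemma path_to_v (w v x : perm_n) : bruhat_le v x -> bruhat_le x w ->
  connect (mg_edge w) x v.
Proof.
case/connectP => s ps ->; elim/last_ind: s ps => [|s y IH]; first by rewrite connect0.
rewrite rcons_path last_rcons => /andP [ps st] yw.
set z := last v s in st IH.
have zw : bruhat_le z w := connect_trans (connect1 st) yw.
apply: connect_trans (IH ps zw); apply: connect1.
case/existsP: st => j /existsP [k] /and3P [jk /eqP ey hl].
apply/existsP; exists j; apply/existsP; exists k.
rewrite jk ey srefK eqxx -ey yw zw /= /bruhat_lt; apply/andP; split.
  by apply: contraTneq hl => ->; rewrite ltnn.
apply: connect1; apply/existsP; exists j; apply/existsP; exists k.
by rewrite jk ey eqxx -ey hl.
Qed.

Lemma pos_path (w u v : perm_n) : u != v -> connect (mg_edge w) u v -> mg_pos_path w u v.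
Proof.
move=> ne /connectP [[|u' s]] /=; first by move=> _ e; rewrite e eqxx in ne.
move=> /andP [e ps] ev; apply/existsP; exists u'; rewrite e /=.
by apply/connectP; exists s.
Qed.

Lemma pos_path_len (w u v : perm_n) : mg_pos_path w u v -> length v < length u.
Proof.
case/existsP => u' /andP [e c]; have h := edge_len e.
case: (connect_dec (f := @length n) (@edge_len w) c) => [<-//|h2].
exact: ltn_trans h2 h.
Qed.

End Comb.

Theorem mainTheorem5 (F : numClosedFieldType) (n : nat) (v w : {perm 'I_n})
    (p : {perm 'I_n} -> {mpoly F[n]}) :
  bruhat_le v w ->
  schubert_class_props v p ->
  KT_class w v p /\
  (forall q : {perm 'I_n} -> {mpoly F[n]}, KT_class w v q ->
     forall u : {perm 'I_n}, bruhat_le u w -> q u = p u).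
Proof.
move=> vw [pH pvan phom pv].
have edge_inv : forall j k : 'I_n, ((j < k)%N && mg_edge w v (sref j k v)) = inv_pair v (j, k).
  move=> j k; apply/idP/idP.
  - case/andP => jk /edge_len hl; apply/negPn/negP => ni.
    have i2 : inv_pair (sref j k v) (j, k).
      rewrite /inv_pair /= jk !sref_inv tpermL tpermR /=.
      move: ni; rewrite /inv_pair /= jk /= -leqNgt leq_eqVlt => /orP [/eqP e|//].
      by move/val_inj/perm_inj: e => e; move: jk; rewrite e ltnn.
    by have := len_lt jk i2; rewrite srefK => h; move: (ltn_trans h hl); rewrite ltnn.
  - move=> hi; have jk : (j < k)%N by case/andP: hi.
    have hl := len_lt jk hi.
    rewrite jk /=; apply/existsP; exists j; apply/existsP; exists k.
    have st := step_of jk hl.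
    have hw : bruhat_le (sref j k v) w := connect_trans (connect1 st) vw.
    have hle : bruhat_le (sref j k v) v := connect1 st.
    rewrite jk eqxx vw hw /= /bruhat_lt hle andbT.
    by apply: contraTneq hl => ->; rewrite ltnn.
have pv_out : p v = out_label_prod F w v.
  rewrite pv /inv_prod /out_label_prod; apply: eq_bigl => [[j k]] /=.
  by rewrite edge_inv.
have pv_nz : (p v != 0)%R.
  rewrite pv /inv_prod; apply/prodf_neq0 => [[j k]] /andP [/= jk _].
  by apply: X_neq; apply/eqP => e; move: jk; rewrite e ltnn.
have tdv : tdeg (p v) = length v.
  by rewrite /tdeg (msize_homog pv_nz (phom _ pv_nz)).
have p_vanish : forall u, bruhat_le u w -> u != v -> ~~ mg_pos_path w u v -> p u = 0%R.
  move=> u uw uv np; case vu: (bruhat_le v u); last by apply: pvan; rewrite vu.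
  by rewrite (pos_path uv (path_to_v vu uw)) in np.
have KTp : KT_class w v p.
  split => //.
  - by move=> u j k jk _ _; apply: pH.
  - by move=> u _ nz; rewrite tdv; apply: phom.
split => // q [qH qv qhom qvan].
suff H : forall k u, (length u < k)%N -> bruhat_le u w -> q u = p u.
  by move=> u; apply: H (ltnSn _).
elim=> [//|K IH] u hk uw.
apply/eqP/negPn/negP => neq.
have uv : u != v by apply: contraNneq neq => ->; rewrite qv pv_out.
have pp : mg_pos_path w u v.
  case: (boolP (mg_pos_path w u v)) => // np.
  by move: neq; rewrite (qvan _ uw uv np) (p_vanish _ uw uv np) eqxx.
have lv := pos_path_len pp.
have tdq : tdeg (q v) = length v by rewrite qv -pv_out.
have hq : q u \is (length v).-homog.
  by case: (eqVneq (q u) 0%R) => [->|nz]; [exact: rpred0 | rewrite -tdq; apply: qhom].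
have hp : p u \is (length v).-homog.
  by case: (eqVneq (p u) 0%R) => [->|nz]; [exact: rpred0 | apply: phom].
have nzd : (q u - p u != 0)%R by rewrite subr_eq0.
have sz : size (enum [pred P | inv_pair u P]) = length u by rewrite /length cardE.
suff : (size (enum [pred P | inv_pair u P]) <= length v)%N by rewrite sz leqNgt lv.
apply: (count_bound (enum_uniq _) _ nzd (rpredB hq hp)).
- by apply/allP => P; rewrite mem_enum => /andP [].
- case=> j k; rewrite mem_enum => hi; have jk : (j < k)%N by case/andP: hi.
  have hl := len_lt jk hi.
  have u'w : bruhat_le (sref j k u) w := connect_trans (connect1 (step_of jk hl)) uw.
  have e : q (sref j k u) = p (sref j k u) by apply: IH u'w; exact: leq_trans hl hk.
  have [r1 h1] := qH u j k jk uw u'w.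
  have [r2 h2] := pH u j k jk isT isT.
  exists (r1 - r2)%R; rewrite /L /= mulrBl -h1 -h2 e.
  by rewrite opprB addrA subrK.
Qed.
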